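(* Let $\Gamma$ be a countable group, $E$ a countable free $\Gamma$-set, $\Gamma\curvearrowright(X,\mu)$ a free standard $\Gamma$-space, and $P=(W_s)_{s\in S}$ a $\Gamma$-equivariant $\mu$-partition of $X\times E$ of finite type, with $S$ countable. Then \[\Phi^P\colon\mathbb{Z}[E^{*+1}]\to L^\infty_{fs}(X\times S^{*+1};\mathbb{Z}),\qquad (e_0,\dots,e_n)\mapsto\big((x,s_0,\dots,s_n)\mapsto\chi_{W_{(s_0,\dots,s_n)}}(x,e_0,\dots,e_n)\big)\] is a well-defined $\mathbb{Z}\Gamma$-chain map that extends the inclusion $\mathbb{Z}\hookrightarrow L^\infty(X;\mathbb{Z})$.
   Context: A standard $\Gamma$-space is a measure preserving action on a standard Borel probability space $(X,\mu)$. A $\Gamma$-equivariant $\mu$-partition of $X\times E$ is a family $(W_s)_{s\in S}$ of pairwise disjoint Borel subsets of $X\times E$ whose union is conull for $\mu\otimes$(counting measure), where $S$ carries a free $\Gamma$-action with $\gamma\cdot W_s=W_{\gamma s}$ (diagonal action on $X\times E$). It is of finite type if for each $e\in E$ only finitely many $s$ satisfy $W_s\cap(X\times\{e\})\neq\emptyset$. For $s=(s_0,\dots,s_n)\in S^{n+1}$, $W_{s}:=\{(x,e_0,\dots,e_n): (x,e_r)\in W_{s_r}\ \forall r\}$. $L^\infty_{fs}(X\times S^{n+1};\mathbb{Z})$ is the $\mathbb{Z}\Gamma$-module of (classes of) essentially bounded measurable $f\colon X\times S^{n+1}\to\mathbb{Z}$ supported in $X\times F$ for a finite $F\subset S^{n+1}$,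 with diagonal $\Gamma$-action, boundary $(\partial_nf)(x,s_0,\dots,s_{n-1})=\sum_{j=0}^n(-1)^j\sum_{t\in S}f(x,s_0,\dots,s_{j-1},t,s_j,\dots,s_{n-1})$, augmentation $\tilde\varepsilon_Sf=\sum_sf(\cdot,s)$. $\mathbb{Z}[E^{*+1}]$ has the simplicial boundary and augmentation $\varepsilon_E(e)=1$. Extending the inclusion $\iota$ of constants means $\tilde\varepsilon_S\circ\Phi^P_0=\iota\circ\varepsilon_E$. *)

(* Defs.v *)
From HB Require Import structures.
From mathcomp Require Import all_boot all_order all_algebra.
From mathcomp Require Import all_classical all_reals all_analysis.
Set Implicit Arguments. Unset Strict Implicit. Unset Printing Implicit Defensive.
Import Order.TTheory GRing.Theory Num.Theory.
Local Open Scope classical_set_scope.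
Local Open Scope ring_scope.

Definition is_group {G : Type} (mul : G -> G -> G) (one : G) (inv : G -> G) :=
  [/\ forall a b c, mul a (mul b c) = mul (mul a b) c,
      forall a, mul one a = a,
      forall a, mul a one = a,
      forall a, mul (inv a) a = one &
      forall a, mul a (inv a) = one].

Definition is_action {G T : Type} (mul : G -> G -> G) (one : G)
  (act : G -> T -> T) :=
  (forall t, act one t = t) /\ (forall g h t, act (mul g h) t = act g (act h t)).

Definition free_action {G T : Type} (one : G) (act : G -> T -> T) :=
  forall g t, act g t = t -> g = one.

(* Standard Borel space: Borel isomorphic to a Borel subset of the reals. *)
Definition standard_borel d (X : measurableType d) (R : realType) :=
  exists f : X -> R, [/\ measurable_fun setT f, injective f &
    forall A : set X, measurable A -> measurable (f @` A)].

Definition measure_preserving_action d (X : measurableType d) (R : realType)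
  (mu : probability X R) {G : Type} (act : G -> X -> X) :=
  forall g, measurable_fun setT (act g) /\
    forall A : set X, measurable A -> mu (act g @^-1` A) = mu A.

Definition ess_free_action d (X : measurableType d) (R : realType)
  (mu : probability X R) {G : Type} (one : G) (act : G -> X -> X) :=
  {ae mu, forall x, forall g, act g x = x -> g = one}.

(* Gamma-equivariant mu-partition of X x E of finite type, indexed by S.
   The sets W s are Borel in X x E (E countable, discrete). *)
Definition equiv_partition_finite_type d (X : measurableType d)
  (R : realType) (mu : probability X R) {G E S : Type} (inv : G -> G)
  (actX : G -> X -> X) (actE : G -> E -> E) (actS : G -> S -> S)
  (W : S -> set (X * E)) :=
  [/\ (forall s e, measurable [set x | W s (x, e)]),
      (forall s t, s <> t -> W s `&` W t = set0),
      (* the union is conull for mu (x) counting measure on X x E *)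
      (forall e, mu [set x | forall s, ~ W s (x, e)] = 0%E),
      (forall g s, (fun p => (actX g p.1, actE g p.2)) @` W s = W (actS g s)) &
      (forall e, finite_set [set s | exists x, W s (x, e)])].

Definition Phi {X E S : Type} (W : S -> set (X * E)) (e : seq E)
  (x : X) (s : seq S) : int :=
  if size s == size e then \prod_(p <- zip s e) \1_(W p.1) (x, p.2) else 0.

(* f is (a representative of) an element of L^oo_fs(X x S^{n+1}; Z):
   measurable in x (S discrete), bounded, supported in X x F, F finite
   subset of S^{n+1}. *)
Definition in_Linf_fs d (X : measurableType d) {S : eqType} (n : nat)
  (f : X -> seq S -> int) :=
  [/\ (forall s (k : int), measurable [set x | f x s = k]),
      (exists M : int, forall x s, `|f x s| <= M) &
      (exists F : seq (seq S), (forall s, s \in F -> size s = n.+1) /\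
         forall x s, s \notin F -> f x s = 0)].

Definition ins {S : Type} (j : nat) (t : S) (s : seq S) :=
  take j s ++ t :: drop j s.

Definition del {E : Type} (j : nat) (e : seq E) := take j e ++ drop j.+1 e.

(* boundary of L^oo_fs(X x S^{*+1}; Z), from degree n to degree n-1 *)
Definition bdry_fs {X : Type} {S : choiceType} (n : nat)
  (f : X -> seq S -> int) (x : X) (s : seq S) : int :=
  \sum_(j < n.+1) (-1) ^+ j * \sum_(t \in [set: S]) f x (ins j t s).

Definition aug_fs {X : Type} {S : choiceType} (f : X -> seq S -> int)
  (x : X) : int := \sum_(t \in [set: S]) f x [:: t].

Definition Phi_bdry {X E S : Type} (W : S -> set (X * E)) (e : seq E)
  (x : X) (s : seq S) : int :=
  \sum_(j < size e) (-1) ^+ j * Phi W (del j e) x s.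

(* Main.v *)
Require Import Defs.
From HB Require Import structures.
From mathcomp Require Import all_boot all_order all_algebra.
From mathcomp Require Import all_classical all_reals all_analysis.
Import Order.TTheory GRing.Theory Num.Theory.
Local Open Scope classical_set_scope.
Local Open Scope ring_scope.

Lemma Phi_cons {X E S : Type} (W : S -> set (X * E)) f e x t s :
  Phi W (f :: e) x (t :: s) = \1_(W t) (x, f) * Phi W e x s.
Proof. by rewrite /Phi /= eqSS; case: ifP => _; rewrite ?big_cons ?mulr0. Qed.

Lemma Phi_nil_r {X E S : Type} (W : S -> set (X * E)) f e x :
  Phi W (f :: e) x [::] = 0.
Proof. by []. Qed.

Lemma Phi_nil_l {X E S : Type} (W : S -> set (X * E)) x t s :
  Phi W [::] x (t :: s) = 0.
Proof. by []. Qed.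

Lemma Phi_nil {X E S : Type} (W : S -> set (X * E)) x :
  Phi W [::] x [::] = 1.
Proof. by rewrite /Phi /= big_nil. Qed.

Lemma Phi_ins {X E S : Type} (W : S -> set (X * E)) f0 j e x t s :
  (j < size e)%N ->
  Phi W e x (ins j t s) = \1_(W t) (x, nth f0 e j) * Phi W (del j e) x s.
Proof.
elim: j e s => [|j IH] [|f e] s //=.
- by move=> _; rewrite /ins /del /= take0 !drop0 cat0s Phi_cons.
- move=> hj; case: s => [|u s].
  + rewrite /ins /del /= Phi_cons Phi_nil_r mulr0.
    by case: e hj => // f' e' _; rewrite Phi_nil_r mulr0.
  + rewrite /ins /del /= -/(ins j t s) -/(del j e) !Phi_cons (IH e s hj).
    by rewrite mulrCA.
Qed.

Lemma sum_one {S : countType} (F : S -> int) s0 :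
  (forall t, t <> s0 -> F t = 0) -> \sum_(t \in [set: S]) F t = F s0.
Proof.
move=> H; rewrite -(@fsbig_widen _ _ _ _ [set s0]) ?fsbig_set1 //.
by move=> t [_ /= ht]; apply: H.
Qed.

Lemma ae_cover (E S : countType) (d : measure_display) (X : measurableType d)
  (R : realType) (mu : probability X R) (W : S -> set (X * E)) (e : E) :
  (forall s e, measurable [set x | W s (x, e)]) ->
  mu [set x | forall s, ~ W s (x, e)] = 0%E ->
  {ae mu, forall x, exists s, W s (x, e)}.
Proof.
move=> Hm H0.
exists [set x | forall s, ~ W s (x, e)]; split => //; last first.
  by move=> x /= Hx s Hs; apply: Hx; exists s.
pose F (k : nat) := if (unpickle k : option S) is Some s then [set x | W s (x, e)] else set0.
have -> : [set x | forall s, ~ W s (x, e)] = ~` \bigcup_(k in setT) F k.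
  apply/seteqP; split => x /=.
  - move=> Hx [k _]; rewrite /F; case: (unpickle k) => // s; exact: Hx.
  - move=> Hx s Hs; apply: Hx; exists (pickle s) => //; by rewrite /F pickleK.
apply: measurableC; apply: bigcup_measurable => k _; rewrite /F.
by case: (unpickle k) => // s; exact: Hm.
Qed.

Lemma indic_disj {X E S : Type} (W : S -> set (X * E)) x f s0 t :
  (forall s t, s <> t -> W s `&` W t = set0) ->
  W s0 (x, f) -> t <> s0 -> \1_(W t) (x, f) = 0 :> int.
Proof.
move=> Hd Hs ht; rewrite indicE memNset // => Ht.
have : (W t `&` W s0) (x, f) by [].
by rewrite Hd.
Qed.

Lemma indic_one {X E S : Type} (W : S -> set (X * E)) x f s0 :
  W s0 (x, f) -> \1_(W s0) (x, f) = 1 :> int.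
Proof. by move=> H; rewrite indicE mem_set. Qed.

Definition Aset {X E S : Type} (W : S -> set (X * E)) (p : seq (S * E)) : set X :=
  foldr (fun q A => [set x | W q.1 (x, q.2)] `&` A) setT p.

Lemma prod_indic {X E S : Type} (W : S -> set (X * E)) p x :
  \prod_(q <- p) \1_(W q.1) (x, q.2) = \1_(Aset W p) x :> int.
Proof.
elim: p => [|q p IH].
  by rewrite big_nil indicE mem_set.
rewrite big_cons IH /= indicI /=; congr (_ * _).
Qed.

Lemma Aset_meas d (X : measurableType d) {E S : Type} (W : S -> set (X * E)) p :
  (forall s e, measurable [set x | W s (x, e)]) -> measurable (Aset W p).
Proof.
move=> Hm; elim: p => [|q p IH].
  exact: measurableT.
exact: measurableI.
Qed.

Lemma Phi_meas d (X : measurableType d) {E S : Type} (W : S -> set (X * E)) e s (k : int) :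
  (forall s e, measurable [set x | W s (x, e)]) ->
  measurable [set x | Phi W e x s = k].
Proof.
move=> Hm; rewrite /Phi; case: (size s == size e).
  under eq_set => x do rewrite prod_indic.
  rewrite (_ : [set x | _] = \1_(Aset W (zip s e)) @^-1` [set k]) //.
  rewrite preimage_indic.
  have HA : measurable (Aset W (zip s e)) by exact: Aset_meas.
  by repeat case: ifP => _; try exact: measurableC.
have [->|hk] := pselect (0 = k).
  by rewrite (_ : [set _ | _] = setT) //; apply/seteqP; split.
by rewrite (_ : [set _ | _] = set0) //; apply/seteqP; split.
Qed.

Lemma Phi_bound {X E S : Type} (W : S -> set (X * E)) e x s :
  `|Phi W e x s| <= 1.
Proof.
rewrite /Phi; case: ifP => _ //; rewrite prod_indic indicE.
by case: (_ \in _).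
Qed.

Definition Fseq {S E : Type} (T : E -> seq S) (e : seq E) : seq (seq S) :=
  foldr (fun f acc => [seq t :: u | t <- T f, u <- acc]) [:: [::]] e.

Lemma Fseq_size {S E : eqType} (T : E -> seq S) e u :
  u \in Fseq T e -> size u = size e.
Proof.
elim: e u => [|f e IH] u /=; first by rewrite inE => /eqP ->.
by case/allpairsP => -[t v] [_ /= Hv ->] /=; rewrite (IH _ Hv).
Qed.

Lemma Fseq_supp {X : Type} {S E : eqType} (W : S -> set (X * E)) (T : E -> seq S) e x s :
  (forall t f x, W t (x, f) -> t \in T f) ->
  s \notin Fseq T e -> Phi W e x s = 0.
Proof.
move=> HT; elim: e s => [|f e IH] [|t s] //=.
move=> Hn; rewrite Phi_cons.
have [Ht|Ht] := pselect (W t (x, f)).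
  rewrite IH ?mulr0 //; apply/negP => Hs; move/negP: Hn; apply.
  exact: (allpairs_f (fun t u => t :: u) (HT _ _ _ Ht) Hs).
by rewrite indicE memNset ?mul0r.
Qed.

Lemma Phi_equiv {G X E S : Type} (mul : G -> G -> G) (one : G) (inv : G -> G)
  (actX : G -> X -> X) (actE : G -> E -> E) (actS : G -> S -> S)
  (W : S -> set (X * E)) :
  is_group mul one inv -> is_action mul one actE -> is_action mul one actX ->
  (forall g s, (fun p => (actX g p.1, actE g p.2)) @` W s = W (actS g s)) ->
  forall g e s x, Phi W (map (actE g) e) x s =
    Phi W e (actX (inv g) x) (map (actS (inv g)) s).
Proof.
move=> [_ _ _ linv rinv] [E1 EM] [X1 XM] Heq g e.
elim: e => [|f e IH] [|t s] x.
1-3: by rewrite /Phi /= ?big_nil.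
change (Phi W (actE g f :: map (actE g) e) x (t :: s) =
  Phi W (f :: e) (actX (inv g) x) (actS (inv g) t :: map (actS (inv g)) s)).
rewrite !Phi_cons IH; congr (_ * _).
have H1 : W t (x, actE g f) -> W (actS (inv g) t) (actX (inv g) x, f).
  rewrite -Heq => H; exists (x, actE g f) => //=.
  by rewrite -EM linv E1.
have H2 : W (actS (inv g) t) (actX (inv g) x, f) -> W t (x, actE g f).
  rewrite -Heq => -[[y f'] Hy [Hy1 Hy2]].
  have -> : x = y by rewrite -[y]X1 -(rinv g) XM Hy1 -XM rinv X1.
  have -> : actE g f = f' by rewrite -Hy2 -EM rinv E1.
  exact: Hy.
have [H|H] := pselect (W t (x, actE g f)).
  by rewrite !indicE (mem_set H) (mem_set (H1 H)).
by rewrite !indicE (memNset H) memNset // => /H2.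
Qed.

Theorem proposition4p5
  (G : countType) (mul : G -> G -> G) (one : G) (inv : G -> G)
  (E S : countType) (d : measure_display) (X : measurableType d)
  (R : realType) (mu : probability X R)
  (actX : G -> X -> X) (actE : G -> E -> E) (actS : G -> S -> S)
  (W : S -> set (X * E)) :
  is_group mul one inv ->
  is_action mul one actE -> free_action one actE ->
  standard_borel X R ->
  is_action mul one actX -> measure_preserving_action mu actX ->
  ess_free_action mu one actX ->
  is_action mul one actS -> free_action one actS ->
  equiv_partition_finite_type mu inv actX actE actS W ->
  (* well-defined: Phi^P(e) lies in L^oo_fs(X x S^{n+1}; Z) *)
  [/\ (forall (n : nat) (e : seq E), size e = n.+1 -> in_Linf_fs n (Phi W e)),
      (* Z Gamma-equivariance (diagonal actions) *)
      (forall (g : G) (e : seq E) (s : seq S),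
         {ae mu, forall x, Phi W (map (actE g) e) x s =
                           Phi W e (actX (inv g) x) (map (actS (inv g)) s)}),
      (* chain map: d_{n+1} o Phi_{n+1} = Phi_n o d_{n+1} *)
      (forall (n : nat) (e : seq E) (s : seq S), size e = n.+2 ->
         {ae mu, forall x, bdry_fs n.+1 (Phi W e) x s = Phi_bdry W e x s}) &
      (* extends the inclusion Z -> L^oo(X; Z) *)
      (forall e : E, {ae mu, forall x, aug_fs (Phi W [:: e]) x = 1})].
Proof.
move=> Hg HE _ _ HX _ _ _ _ [Hm Hd H0 Heq Hfin].
have cover (e : E) : {ae mu, forall x, exists s, W s (x, e)} by exact: ae_cover.
split.
- move=> n e He; split.
  + by move=> s k; exact: Phi_meas.
  + by exists 1 => x s; exact: Phi_bound.
  + pose T (f : E) : seq S := finmap.enum_fset (fset_set [set s | exists x, W s (x, f)]).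
    exists (Fseq T e); split.
      by move=> s /Fseq_size ->.
    move=> x s Hs; apply: (@Fseq_supp X S E W T e x s _ Hs) => t f y Ht.
    by rewrite /T in_fset_set //; apply: mem_set; exists y.
- move=> g e s; apply: nearW => x.
  exact: (@Phi_equiv _ _ _ _ mul one inv actX actE actS W Hg HE HX Heq).
- move=> n e s He.
  case: e He => [//|f0 e'] He.
  have := @filter_forall X 'I_(size (f0 :: e'))
     (fun j x => exists s, W s (x, nth f0 (f0 :: e') j)) _
     (ae_filter_ringOfSetsType mu)
     (fun j => cover (nth f0 (f0 :: e') j)).
  apply: (@filterS _ _ (ae_filter_ringOfSetsType mu)) => x Hx.
  rewrite /bdry_fs /Phi_bdry He; apply: eq_bigr => j _; congr (_ * _).
  have [s0 Hs0] := Hx (cast_ord (esym He) j).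
  rewrite (@sum_one _ _ s0).
    by rewrite (Phi_ins W f0) ?He // indic_one // mul1r.
  move=> t ht; rewrite (Phi_ins W f0) ?He //.
  by rewrite (@indic_disj _ _ _ W _ _ _ _ Hd Hs0 ht) mul0r.
- move=> e; apply: (@filterS _ _ (ae_filter_ringOfSetsType mu) _ _ _ (cover e)) => x [s0 Hs0].
  rewrite /aug_fs (@sum_one _ _ s0).
    by rewrite Phi_cons Phi_nil indic_one // mul1r.
  by move=> t ht; rewrite Phi_cons (@indic_disj _ _ _ W _ _ _ _ Hd Hs0 ht) mul0r.
Qed.
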